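(* Let $N\ge1$, $m>1$, $\alpha,\beta\in\mathbb R$ with $N+\alpha-m>0$ and $\beta-\alpha+1>0$; let $s_0\ge0$, $\lambda>0$ and $\wp>0$. Let $u\in C^1(s_0,\infty)$ be a nonnegative solution of $$-(r^{N+\alpha-1}|u'(r)|^{m-2}u'(r))'=\lambda r^{N+\beta-1}u^{\wp}(r),\ r\in(s_0,\infty),\qquad u(s_0)=1,\quad u'(s_0)\le0.$$ Let $\varrho=\frac{N+\alpha-m}{m-1}$. Then the function $U_\varrho(r):=ru'(r)+\varrho u(r)$ is nonnegative and nonincreasing on $(s_0,\infty)$. In particular, $r^\varrho u(r)$ is nondecreasing on $(s_0,\infty)$. *)

(* Defs.v *)
From Stdlib Require Import Reals.
From Coquelicot Require Import Coquelicot.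
Open Scope R_scope.

(* Power x^p for x >= 0, with the convention 0^p = 0 (p > 0). *)
Definition rpow (x p : R) : R := if Rlt_dec 0 x then Rpower x p else 0.

(* phi_m(t) = |t|^(m-2) t, extended by continuity with phi_m(0) = 0 (m > 1). *)
Definition phim (m t : R) : R :=
  if Rlt_dec 0 t then Rpower t (m - 1)
  else if Rlt_dec t 0 then - Rpower (- t) (m - 1) else 0.

(* Main.v *)
Require Import Defs.
From Stdlib Require Import Reals Lra.
From Coquelicot Require Import Coquelicot.
Open Scope R_scope.

Lemma nonincr (f df : R -> R) (a b : R) : a <= b ->
  (forall x, a <= x <= b -> is_derive f x (df x)) ->
  (forall x, a <= x <= b -> df x <= 0) -> f b <= f a.
Proof.
  intros hab hd hs.
  destruct (MVT_gen f a b df) as [c [hc he]].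
  - intros x hx. rewrite Rmin_left in hx by lra. rewrite Rmax_right in hx by lra.
    apply hd; lra.
  - intros x hx. rewrite Rmin_left in hx by lra. rewrite Rmax_right in hx by lra.
    apply continuity_pt_filterlim.
    apply (@ex_derive_continuous R_AbsRing R_NormedModule).
    eexists. apply hd; lra.
  - rewrite Rmin_left in hc by lra. rewrite Rmax_right in hc by lra.
    assert (df c * (b - a) <= 0).
    { assert (df c <= 0) by (apply hs; lra). nra. }
    lra.
Qed.

Lemma is_derive_Rpower (y x : R) : 0 < x ->
  is_derive (fun t => Rpower t y) x (y * Rpower x (y - 1)).
Proof. intros hx. apply is_derive_Reals. now apply derivable_pt_lim_power. Qed.

Lemma Rpower_pos' x y : 0 < Rpower x y.
Proof. unfold Rpower. apply exp_pos. Qed.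

Lemma phim_pos m x : 0 < phim m x -> 0 < x.
Proof.
  unfold phim. destruct (Rlt_dec 0 x); auto.
  destruct (Rlt_dec x 0). intros h. pose proof (Rpower_pos' (-x) (m-1)). lra. lra.
Qed.

Lemma phim_posE m x : 0 < x -> phim m x = Rpower x (m-1).
Proof. unfold phim. destruct (Rlt_dec 0 x); lra. Qed.

Lemma phim_negE m x : x < 0 -> phim m x = - Rpower (-x) (m-1).
Proof. unfold phim. destruct (Rlt_dec 0 x); try lra. destruct (Rlt_dec x 0); lra. Qed.

Lemma phim_0 m : phim m 0 = 0.
Proof. unfold phim. destruct (Rlt_dec 0 0); try lra. Qed.

Lemma rpow_ge0 x p : 0 <= rpow x p.
Proof. unfold rpow. destruct (Rlt_dec 0 x). left; apply Rpower_pos'. lra. Qed.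
Lemma Wform r x a rho m : 0 < r -> x < 0 -> a = (rho+1)*(m-1) ->
  Rpower r a * phim m x = - Rpower (-x * Rpower r (rho+1)) (m-1).
Proof.
  intros hr hx ha. rewrite phim_negE by lra.
  rewrite <- Rpower_mult_distr by (try lra; apply Rpower_pos').
  rewrite Rpower_mult, ha. ring.
Qed.

Lemma Rpower_inv_cancel r y : Rpower r y * Rpower r (- y) = 1.
Proof. rewrite <- Rpower_plus. replace (y + - y) with 0 by ring. unfold Rpower. rewrite Rmult_0_l. apply exp_0. Qed.

Theorem lemma3p1 (N : nat) (m alpha beta s0 lambda wp : R) (u u' : R -> R)
  (hN : (1 <= N)%nat) (hm : 1 < m)
  (hNam : 0 < INR N + alpha - m) (hba : 0 < beta - alpha + 1)
  (hs0 : 0 <= s0) (hlam : 0 < lambda) (hwp : 0 < wp)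
  (hder : forall r, s0 < r -> is_derive u r (u' r))
  (hcont : forall r, s0 < r -> continuous u' r)
  (hu_s0 : filterlim u (at_right s0) (locally (u s0)))
  (hu'_s0 : filterlim u' (at_right s0) (locally (u' s0)))
  (hpos : forall r, s0 <= r -> 0 <= u r)
  (hode : forall r, s0 < r ->
     is_derive (fun t => Rpower t (INR N + alpha - 1) * phim m (u' t)) r
               (- (lambda * Rpower r (INR N + beta - 1) * rpow (u r) wp)))
  (hinit : u s0 = 1) (hinit' : u' s0 <= 0) :
  let rho := (INR N + alpha - m) / (m - 1) in
  let U := fun r => r * u' r + rho * u r in
  (forall r, s0 < r -> 0 <= U r) /\
  (forall r1 r2, s0 < r1 -> r1 <= r2 -> U r2 <= U r1) /\
  (forall r1 r2, s0 < r1 -> r1 <= r2 ->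
     Rpower r1 rho * u r1 <= Rpower r2 rho * u r2).
Proof.
  intros rho U.
  set (a := INR N + alpha - 1).
  set (W := fun t => Rpower t a * phim m (u' t)).
  assert (hrho : 0 < rho).
  { unfold rho. apply Rdiv_lt_0_compat; lra. }
  assert (ha : a = (rho+1)*(m-1)).
  { unfold a, rho. field. lra. }
  assert (ha0 : 0 < a) by (rewrite ha; nra).
  assert (hW : forall r1 r2, s0 < r1 -> r1 <= r2 -> W r2 <= W r1).
  { intros r1 r2 h1 h2.
    apply (nonincr W (fun r => - (lambda * Rpower r (INR N + beta - 1) * rpow (u r) wp))); auto.
    - intros x hx. apply hode. lra.
    - intros x hx. pose proof (Rpower_pos' x (INR N + beta - 1)).
      pose proof (rpow_ge0 (u x) wp).
      assert (0 <= lambda * Rpower x (INR N + beta - 1) * rpow (u x) wp).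
      { apply Rmult_le_pos; auto. nra. }
      lra. }
  assert (hneg : forall r, s0 < r -> u' r <= 0).
  { intros r hr. destruct (Rle_lt_dec (u' r) 0) as [h|h]; auto. exfalso.
    assert (hWr : W r = Rpower r a * Rpower (u' r) (m-1)).
    { unfold W. now rewrite phim_posE. }
    assert (hge : forall t, s0 < t <= r -> u' r <= u' t).
    { intros t ht.
      assert (W r <= W t) by (apply hW; lra).
      assert (0 < W r) by (rewrite hWr; apply Rmult_lt_0_compat; apply Rpower_pos').
      assert (hp : 0 < phim m (u' t)).
      { unfold W in *. pose proof (Rpower_pos' t a).
        destruct (Rle_lt_dec (phim m (u' t)) 0); auto. nra. }
      pose proof (phim_pos _ _ hp) as ht'.
      destruct (Rle_lt_dec (u' r) (u' t)) as [|hlt]; auto. exfalso.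
      assert (Rpower (u' t) (m-1) < Rpower (u' r) (m-1)).
      { apply Rlt_Rpower_l; lra. }
      assert (Rpower t a <= Rpower r a).
      { apply Rle_Rpower_l; lra. }
      unfold W in *. rewrite phim_posE in * by lra.
      pose proof (Rpower_pos' t a). pose proof (Rpower_pos' (u' t) (m-1)).
      assert (Rpower t a * Rpower (u' t) (m-1) < Rpower t a * Rpower (u' r) (m-1))
        by (apply Rmult_lt_compat_l; auto).
      assert (Rpower t a * Rpower (u' r) (m-1) <= Rpower r a * Rpower (u' r) (m-1))
        by (apply Rmult_le_compat_r; auto; left; apply Rpower_pos').
      rewrite (phim_posE m (u' t)) in H by lra. lra. }
    assert (hev := hu'_s0 (fun y => ball (u' s0) (u' r) y)).
    destruct hev as [d hd].
    { exists (mkposreal _ h). intros y hy. exact hy. }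
    set (t := s0 + Rmin d (r - s0) / 2).
    assert (hmin1 : 0 < Rmin d (r - s0)).
    { apply Rmin_pos; [apply cond_pos | lra]. }
    assert (hmin2 : Rmin d (r - s0) <= d) by apply Rmin_l.
    assert (hmin3 : Rmin d (r - s0) <= r - s0) by apply Rmin_r.
    assert (hb : ball (u' s0) (u' r) (u' t)).
    { apply hd.
      - unfold ball; simpl; unfold AbsRing_ball, abs, minus, plus, opp; simpl.
        unfold t. rewrite Rabs_right; lra.
      - unfold t; lra. }
    unfold ball in hb; simpl in hb; unfold AbsRing_ball, abs, minus, plus, opp in hb; simpl in hb.
    apply Rabs_def2 in hb.
    assert (u' r <= u' t) by (apply hge; unfold t; lra).
    lra. }
  set (v := fun r => - u' r * Rpower r (rho+1)).
  assert (hv0 : forall r, s0 < r -> 0 <= v r).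
  { intros r hr. unfold v. pose proof (hneg r hr). pose proof (Rpower_pos' r (rho+1)). nra. }
  assert (hWv : forall r, s0 < r -> u' r < 0 -> W r = - Rpower (v r) (m-1)).
  { intros r hr h. unfold W, v. apply Wform; auto. lra. }
  assert (hvmono : forall r1 r2, s0 < r1 -> r1 <= r2 -> v r1 <= v r2).
  { intros r1 r2 h1 h2.
    destruct (Req_dec (u' r1) 0) as [e|e].
    { unfold v at 1. rewrite e. pose proof (hv0 r2 ltac:(lra)). lra. }
    assert (hu1 : u' r1 < 0) by (pose proof (hneg r1 h1); lra).
    assert (hv1 : 0 < v r1).
    { unfold v. pose proof (Rpower_pos' r1 (rho+1)). nra. }
    pose proof (hW r1 r2 h1 h2) as hw.
    pose proof (hWv r1 h1 hu1) as hw1.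
    pose proof (Rpower_pos' (v r1) (m-1)).
    destruct (Req_dec (u' r2) 0) as [e2|e2].
    { unfold W in hw, hw1. rewrite e2, phim_0 in hw. lra. }
    assert (hu2 : u' r2 < 0) by (pose proof (hneg r2 ltac:(lra)); lra).
    assert (hv2 : 0 < v r2).
    { unfold v. pose proof (Rpower_pos' r2 (rho+1)). nra. }
    pose proof (hWv r2 ltac:(lra) hu2) as hw2.
    destruct (Rle_lt_dec (v r1) (v r2)) as [|hl]; auto.
    assert (Rpower (v r2) (m-1) < Rpower (v r1) (m-1)) by (apply Rlt_Rpower_l; lra).
    lra. }
  assert (hu'v : forall r, s0 < r -> u' r = - v r * Rpower r (-(rho+1))).
  { intros r hr. unfold v.
    replace (- (- u' r * Rpower r (rho + 1)) * Rpower r (- (rho + 1)))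
      with (u' r * (Rpower r (rho + 1) * Rpower r (- (rho + 1)))) by ring.
    rewrite Rpower_inv_cancel. ring. }
  assert (hK : forall r t, s0 < r -> r <= t ->
     u t - (v r / rho) * Rpower t (-rho) <= u r - (v r / rho) * Rpower r (-rho)).
  { intros r t hr hrt.
    apply (nonincr (fun x => u x - (v r / rho) * Rpower x (-rho))
             (fun x => u' x - (v r / rho) * (-rho * Rpower x (-rho - 1)))); auto.
    - intros x hx.
      pose proof (is_derive_scal _ x (v r / rho) _ (is_derive_Rpower (-rho) x ltac:(lra))) as hd1.
      pose proof (is_derive_minus _ _ x _ _ (hder x ltac:(lra)) hd1) as hd.
      exact hd.
    - intros x hx. rewrite (hu'v x) by lra.
      replace (-rho - 1) with (-(rho+1)) by ring.
      replace (- v x * Rpower x (- (rho + 1)) - v r / rho * (- rho * Rpower x (- (rho + 1))))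
        with (Rpower x (- (rho + 1)) * (v r - v x)) by (field; lra).
      pose proof (Rpower_pos' x (- (rho + 1))).
      pose proof (hvmono r x hr ltac:(lra)). nra. }
  assert (hU : forall r, s0 < r -> U r = rho * u r - v r * Rpower r (-rho)).
  { intros r hr. unfold U. rewrite (hu'v r hr).
    replace (Rpower r (-rho)) with (r * Rpower r (-(rho+1))). ring.
    rewrite <- (Rpower_1 r) at 1 by lra. rewrite <- Rpower_plus. f_equal. ring. }
  assert (hP1 : forall r, s0 < r -> 0 <= U r).
  { intros r hr.
    assert (hge : forall t, r <= t -> - v r * Rpower t (-rho) <= U r).
    { intros t ht. pose proof (hK r t hr ht). pose proof (hpos t ltac:(lra)).
      rewrite hU by auto.
      assert (rho * (u t - v r / rho * Rpower t (- rho)) <= rho * (u r - v r / rho * Rpower r (- rho)))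
        by (apply Rmult_le_compat_l; lra).
      replace (rho * (u t - v r / rho * Rpower t (- rho))) with (rho * u t - v r * Rpower t (-rho)) in H1 by (field; lra).
      replace (rho * (u r - v r / rho * Rpower r (- rho))) with (rho * u r - v r * Rpower r (-rho)) in H1 by (field; lra).
      nra. }
    destruct (Rle_lt_dec 0 (U r)) as [|hl]; auto. exfalso.
    pose proof (hv0 r hr) as hv.
    destruct (Req_dec (v r) 0) as [e|e].
    { pose proof (hge r (Rle_refl _)). rewrite e in H. lra. }
    set (q := 2 * v r / (- U r)).
    assert (hq : 0 < q) by (unfold q; apply Rdiv_lt_0_compat; lra).
    set (t := r + Rpower q (/ rho)).
    assert (hpt : 0 < Rpower q (/rho)) by apply Rpower_pos'.
    assert (htr : Rpower t rho > q).
    { assert (hqq : Rpower (Rpower q (/ rho)) rho = q).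
      { rewrite Rpower_mult. replace (/ rho * rho) with 1 by (field; lra). apply Rpower_1; lra. }
      assert (Rpower (Rpower q (/rho)) rho < Rpower t rho) by (apply Rlt_Rpower_l; unfold t; lra).
      lra. }
    pose proof (hge t ltac:(unfold t; lra)) as h1.
    rewrite Rpower_Ropp in h1.
    assert (/ Rpower t rho < / q) by (apply Rinv_lt_contravar; nra).
    assert (v r * / q = - U r / 2) by (unfold q; field; lra).
    assert (v r * / Rpower t rho < v r * / q) by (apply Rmult_lt_compat_l; lra).
    lra. }
  split; [exact hP1|split].
  - intros r1 r2 h1 h2.
    rewrite (hU r1 h1), (hU r2 ltac:(lra)).
    pose proof (hK r1 r2 h1 h2).
    pose proof (hvmono r1 r2 h1 h2).
    pose proof (Rpower_pos' r2 (-rho)).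
    assert (rho * (u r2 - v r1 / rho * Rpower r2 (- rho)) <= rho * (u r1 - v r1 / rho * Rpower r1 (- rho)))
      by (apply Rmult_le_compat_l; lra).
    replace (rho * (u r2 - v r1 / rho * Rpower r2 (- rho))) with (rho * u r2 - v r1 * Rpower r2 (-rho)) in H2 by (field; lra).
    replace (rho * (u r1 - v r1 / rho * Rpower r1 (- rho))) with (rho * u r1 - v r1 * Rpower r1 (-rho)) in H2 by (field; lra).
    nra.
  - intros r1 r2 h1 h2.
    cut (- (Rpower r2 rho * u r2) <= - (Rpower r1 rho * u r1)). lra.
    apply (nonincr (fun x => - (Rpower x rho * u x))
             (fun x => - (rho * Rpower x (rho - 1) * u x + Rpower x rho * u' x))); auto.
    + intros x hx.
      pose proof (is_derive_opp _ x _ (is_derive_mult _ _ x _ _ (is_derive_Rpower rho x ltac:(lra)) (hder x ltac:(lra)) Rmult_comm)) as hd.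
      exact hd.
    + intros x hx.
      replace (Rpower x rho) with (Rpower x (rho - 1) * x).
      2: { rewrite <- (Rpower_1 x) at 2 by lra. rewrite <- Rpower_plus. f_equal. ring. }
      pose proof (hP1 x ltac:(lra)). unfold U in H.
      pose proof (Rpower_pos' x (rho - 1)).
      replace (rho * Rpower x (rho - 1) * u x + Rpower x (rho - 1) * x * u' x)
        with (Rpower x (rho - 1) * (x * u' x + rho * u x)) by ring.
      nra.
Qed.
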